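(* Let $m\ge 3$, $n=2m$, $\tau(v)=n+1-v$ for $v\in[n]$, and let $G$ be a graph on $[n]$ such that every $3$-set $S\subseteq[n]$ satisfies $|E(G[S])|+|E(G[\tau(S)])|\ge 2$. Define the graph $W$ on $[m]$ by: $\{i,j\}$ is an edge of $W$ iff there is exactly one edge of $G$ with one endpoint in $\{i,\tau(i)\}$ and the other in $\{j,\tau(j)\}$. If $i,j,k\in[m]$ are distinct with $j,k\in N_W(i)$, then there are at least $3$ edges of $G$ with one endpoint in $\{j,\tau(j)\}$ and the other in $\{k,\tau(k)\}$. In particular $W$ is triangle-free.
   Context: $G[A]$ is the induced subgraph on $A$; $N_W(i)$ is the set of neighbours of $i$ in $W$. *)

(* Defs.v *)
From mathcomp Require Import all_boot.
Set Implicit Arguments. Unset Strict Implicit. Unset Printing Implicit Defensive.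

(* Vertex set [n] = {1,...,n} is modelled 0-indexed as 'I_n; vertex v (1-indexed)
   corresponds to the ordinal v-1.  Then tau(v) = n+1-v becomes rev_ord : v |-> n-1-v. *)
Definition tau (n : nat) (v : 'I_n) : 'I_n := rev_ord v.

Definition induced_edges (n : nat) (G : rel 'I_n) (S : {set 'I_n}) : nat :=
  #|[set p : 'I_n * 'I_n | [&& p.1 \in S, p.2 \in S, (p.1 < p.2)%N & G p.1 p.2]]|.

(* number of (ordered) pairs (x,y) with x in A, y in B, xy an edge; for disjoint
   A, B this is the number of edges with one endpoint in A and the other in B. *)
Definition cross_edges (n : nat) (G : rel 'I_n) (A B : {set 'I_n}) : nat :=
  #|[set p : 'I_n * 'I_n | [&& p.1 \in A, p.2 \in B & G p.1 p.2]]|.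

Definition emb (m : nat) (i : 'I_m) : 'I_(m + m) := widen_ord (leq_addr m m) i.

Definition pairset (m : nat) (i : 'I_m) : {set 'I_(m + m)} :=
  [set emb i; tau (emb i)].

Definition Wgraph (m : nat) (G : rel 'I_(m + m)) : rel 'I_m :=
  fun i j => (i != j) && (cross_edges G (pairset i) (pairset j) == 1%N).

(* Main.v *)
Require Import Defs.
From mathcomp Require Import all_boot zify.
Set Implicit Arguments. Unset Strict Implicit. Unset Printing Implicit Defensive.

Lemma tau_neq m (v : 'I_(m + m)) : tau v != v.
Proof. apply/eqP => /(congr1 val) /=. have := ltn_ord v. lia. Qed.

Lemma tauK m (v : 'I_(m + m)) : tau (tau v) = v.
Proof. exact: rev_ordK. Qed.

Lemma pair_tau m (i : 'I_m) v : v \in pairset i -> tau v \in pairset i.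
Proof. rewrite !inE => /orP [] /eqP ->; by rewrite ?tauK eqxx ?orbT. Qed.

Lemma pair_disj m (i j : 'I_m) v : v \in pairset i -> v \in pairset j -> i = j.
Proof.
have hi := ltn_ord i; have hj := ltn_ord j.
rewrite !inE => /orP [] /eqP -> /orP [] /eqP /(congr1 val) /= h; apply/val_inj => /=; lia.
Qed.

Lemma pair_cases m (i : 'I_m) u x : u \in pairset i -> x \in pairset i -> u = x \/ u = tau x.
Proof.
rewrite !inE => /orP [] /eqP -> /orP [] /eqP ->; rewrite ?tauK; auto.
Qed.

Lemma piece n (G : rel 'I_n) (Gsym : symmetric G) (S : {set 'I_n}) a b :
  #|[set p : 'I_n * 'I_n | [&& p.1 \in S, p.2 \in S, (p.1 < p.2)%N & G p.1 p.2]]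
      :&: [set (a, b); (b, a)]| <= G a b.
Proof.
case Gab: (G a b).
  case: (ltnP a b) => hab.
    apply: (@leq_trans #|[set (a, b)]|); last by rewrite cards1.
    apply: subset_leq_card; apply/subsetP => p.
    rewrite !inE => /andP [/and4P [_ _ hlt _]] /orP [] /eqP e; subst p; rewrite ?eqxx //.
    move: hlt hab => /=; lia.
  apply: (@leq_trans #|[set (b, a)]|); last by rewrite cards1.
  apply: subset_leq_card; apply/subsetP => p.
  rewrite !inE => /andP [/and4P [_ _ hlt _]] /orP [] /eqP e; subst p; rewrite ?eqxx //.
  move: hlt hab => /=. lia.
rewrite leqn0 cards_eq0; apply/eqP/setP => p; rewrite !inE.
apply/negP => /andP [/and4P [_ _ _ hG]] /orP [] /eqP e; subst p; move: hG => /=.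
  by rewrite Gab.
by rewrite Gsym Gab.
Qed.

Lemma ind3 n (G : rel 'I_n) (Gsym : symmetric G) (Girr : irreflexive G) (a b c : 'I_n) :
  induced_edges G [set a; b; c] <= G a b + G a c + G b c.
Proof.
rewrite /induced_edges.
set T := [set p | _].
have sub : T \subset (T :&: [set (a,b);(b,a)]) :|: (T :&: [set (a,c);(c,a)]) :|: (T :&: [set (b,c);(c,b)]).
  apply/subsetP => -[p1 p2] hp; move: (hp); rewrite !inE /= => /and4P [h1 h2 hlt hG].
  rewrite h1 h2 hlt hG /=.
  move: h1 h2 hlt hG => /orP [/orP [] |] /eqP -> /orP [/orP [] |] /eqP ->;
    rewrite ?ltnn ?eqxx ?orbT //.
apply: leq_trans (subset_leq_card sub) _.
apply: leq_trans (leq_card_setU _ _) _.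
apply: leq_add; last exact: piece.
apply: leq_trans (leq_card_setU _ _) _.
by apply: leq_add; apply: piece.
Qed.

Lemma card3 n (a b c : 'I_n) : a != b -> a != c -> b != c -> #|[set a; b; c]| = 3.
Proof. move=> ab ac bc; rewrite -setUA !cardsU1 cards1 !inE (negbTE ab) (negbTE ac) (negbTE bc). by []. Qed.

Lemma imset3 n (f : 'I_n -> 'I_n) a b c : f @: [set a; b; c] = [set f a; f b; f c].
Proof. by rewrite !imsetU !imset_set1. Qed.

Lemma cross1 n (G : rel 'I_n) A B : cross_edges G A B == 1 ->
  exists x y, [/\ x \in A, y \in B, G x y &
    forall x' y', x' \in A -> y' \in B -> G x' y' -> x' = x /\ y' = y].
Proof.
move=> /cards1P [[x y] E]; exists x, y.
have : (x, y) \in [set (x, y)] by rewrite inE.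
rewrite -E inE => /and3P [hx hy hG]; split => // x' y' hx' hy' hG'.
have : (x', y') \in [set (x, y)] by rewrite -E inE hx' hy' hG'.
by rewrite inE => /eqP [-> ->].
Qed.

Lemma cross3 n (G : rel 'I_n) (A B : {set 'I_n}) (p q r : 'I_n * 'I_n) : p != q -> p != r -> q != r ->
  p.1 \in A -> p.2 \in B -> G p.1 p.2 ->
  q.1 \in A -> q.2 \in B -> G q.1 q.2 ->
  r.1 \in A -> r.2 \in B -> G r.1 r.2 -> 3 <= cross_edges G A B.
Proof.
move=> pq pr qr ? ? ? ? ? ? ? ? ?.
have -> : 3 = #|[set p; q; r]| by rewrite -setUA !cardsU1 cards1 !inE (negbTE pq) (negbTE pr) (negbTE qr).
apply: subset_leq_card; apply/subsetP => s; rewrite !inE.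
by move=> /orP [/orP [] |] /eqP ->; apply/and3P.
Qed.

Lemma pair_neq m (i j : 'I_m) v w : v \in pairset i -> w \in pairset j -> i != j -> v != w.
Proof. move=> hv hw ij; apply/eqP => e; subst w; by rewrite (pair_disj hv hw) eqxx in ij. Qed.

Lemma core m (G : rel 'I_(m + m)) (Gsym : symmetric G) (Girr : irreflexive G)
  (H3 : forall S : {set 'I_(m + m)}, #|S| = 3 ->
          (2 <= induced_edges G S + induced_edges G (@tau (m + m) @: S))%N)
  (i j k : 'I_m) : i != j -> i != k -> j != k ->
  cross_edges G (pairset i) (pairset j) == 1 ->
  cross_edges G (pairset i) (pairset k) == 1 ->
  3 <= cross_edges G (pairset j) (pairset k).
Proof.
move=> ij ik jk /cross1 [x [y [hx hy Gxy uxy]]] /cross1 [u [z [hu hz Guz uuz]]].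
have tx := pair_tau hx; have ty := pair_tau hy.
have f1 : ~~ G x (tau y).
  apply/negP => /(uxy _ _ hx (pair_tau hy)) [_ e]; by move: (tau_neq y); rewrite e eqxx.
have f2 : ~~ G (tau x) y.
  apply/negP => /(uxy _ _ tx hy) [e _]; by move: (tau_neq x); rewrite e eqxx.
have nb : forall c, c \in pairset k -> ~~ (G x (tau c) && G (tau x) c).
  move=> c hc; apply/negP => /andP [g1 g2].
  have [e1 _] := uxy x y hx hy Gxy.
  have [e3 _] := uuz _ _ hx (pair_tau hc) g1.
  have [e4 _] := uuz _ _ tx hc g2.
  by move: (tau_neq x); rewrite e4 -e3 eqxx.
have [c [hc f3 f4]] : exists c, [/\ c \in pairset k, ~~ G x c & ~~ G (tau x) (tau c)].
  case: (pair_cases hu hx) => e; subst u.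
    exists (tau z); split; first exact: pair_tau.
      apply/negP => /(uuz _ _ hx (pair_tau hz)) [_ e]; by move: (tau_neq z); rewrite e eqxx.
    apply/negP => /(uuz _ _ tx (pair_tau (pair_tau hz))) [e _]; by move: (tau_neq x); rewrite e eqxx.
  exists z; split => //.
    apply/negP => /(uuz _ _ hx hz) [e _]; by move: (tau_neq x); rewrite -e eqxx.
  apply/negP => /(uuz _ _ tx (pair_tau hz)) [_ e]; by move: (tau_neq z); rewrite e eqxx.
have tc := pair_tau hc.
have h1 := H3 [set x; tau y; c] (card3 (pair_neq hx ty ij) (pair_neq hx hc ik) (pair_neq ty hc jk)).
rewrite imset3 tauK in h1.
have h1' := leq_trans h1 (leq_add (ind3 Gsym Girr _ _ _) (ind3 Gsym Girr _ _ _)).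
have h2 := H3 [set x; tau y; tau c] (card3 (pair_neq hx ty ij) (pair_neq hx tc ik) (pair_neq ty tc jk)).
rewrite imset3 !tauK in h2.
have h2' := leq_trans h2 (leq_add (ind3 Gsym Girr _ _ _) (ind3 Gsym Girr _ _ _)).
have nbc := nb c hc.
move: h1'; rewrite (negbTE f1) (negbTE f2) (negbTE f3) (negbTE f4) /= => h1'.
have g1 : G (tau y) c by move: h1'; case: (G (tau y) c); case: (G y (tau c)).
have g2 : G y (tau c) by move: h1'; case: (G (tau y) c); case: (G y (tau c)).
have g3 : G (tau y) (tau c) || G y c.
  move: h2' nbc; rewrite (negbTE f1) (negbTE f2).
  by case: (G (tau y) (tau c)); case: (G y c); case: (G x (tau c)); case: (G (tau x) c).
have nty := tau_neq y; have ntc := tau_neq c.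
case/orP: g3 => g3.
  apply: (@cross3 _ G _ _ (tau y, c) (y, tau c) (tau y, tau c)) => //=.
  - by rewrite xpair_eqE (negbTE nty).
  - by rewrite xpair_eqE eq_sym (negbTE ntc) andbF.
  - by rewrite xpair_eqE eq_sym (negbTE nty).
apply: (@cross3 _ G _ _ (tau y, c) (y, tau c) (y, c)) => //=.
- by rewrite xpair_eqE (negbTE nty).
- by rewrite xpair_eqE (negbTE nty).
- by rewrite xpair_eqE (negbTE ntc) andbF.
Qed.

Theorem mainTheorem7 (m : nat) (Hm : (3 <= m)%N) (G : rel 'I_(m + m))
  (Gsym : symmetric G) (Girr : irreflexive G)
  (H3 : forall S : {set 'I_(m + m)}, #|S| = 3 ->
          (2 <= induced_edges G S + induced_edges G (@tau (m + m) @: S))%N) :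
  (forall i j k : 'I_m, i != j -> i != k -> j != k ->
     Wgraph G i j -> Wgraph G i k ->
     (3 <= cross_edges G (pairset j) (pairset k))%N)
  /\
  (forall i j k : 'I_m, ~ [&& Wgraph G i j, Wgraph G j k & Wgraph G i k]).
Proof.
have P1 : forall i j k : 'I_m, i != j -> i != k -> j != k ->
     Wgraph G i j -> Wgraph G i k ->
     (3 <= cross_edges G (pairset j) (pairset k))%N.
  move=> i j k ij ik jk /andP [_ h1] /andP [_ h2]; exact: (core Gsym Girr H3 ij ik jk h1 h2).
split => // i j k /and3P [hij hjk hik].
have h := hij; have h' := hik; move: hij hjk hik => /andP [ij _] /andP [jk e] /andP [ik _].
have := P1 i j k ij ik jk h h'.
by rewrite (eqP e).
Qed.
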